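(* Let $\kappa_1,\kappa_2>0$ and $a=\sqrt{\kappa_1/\kappa_2}$. For $V>0$, let $\pi^V$ be the unique stationary distribution of the continuous-time Markov chain on $\mathbb{Z}_{\ge0}$ with two transitions: - $x\to x+1$ at rate $\kappa_1V$ (reaction $\emptyset\to X$); - $x\to x-2$ at rate $\frac{\kappa_2}{V}x(x-1)$ (reaction $2X\to\emptyset$). Let $\tilde\pi^V(\tilde w)=\pi^V(V\tilde w)$ for $\tilde w\in\frac1V\mathbb{Z}_{\ge0}$. If $V\to\infty$ along an increasing sequence and $\tilde x^V\in\frac1V\mathbb{Z}_{\ge0}$ with $\tilde x^V\to\tilde x\in(0,\infty)$, then $$\lim_{V\to\infty}\Big[-\tfrac1V\ln\tilde\pi^V(\tilde x^V)\Big]=g(\tilde x),$$ where $$g(\tilde x)=2\sqrt2\,a-2\tilde x\ln a+\tilde x\ln\tilde x-\tilde x(1+\ln2)-\sqrt{\tilde x^2+4a^2}+\tilde x\ln\!\big(\tilde x+\sqrt{\tilde x^2+4a^2}\big).$$ Moreover, $g$ is a Lyapunov function for the deterministic model $\dot x=\kappa_1-2\kappa_2x^2$ on $(0,\infty)$ at its equilibrium $x^*=\sqrt{\kappa_1/(2\kappa_2)}$: - $g''>0$ on $(0,\infty)$; - $g(x^* )=0$ and $g(x)>0$ for $x\neq x^*$; - $g'(x)(\kappa_1-2\kappa_2x^2)\le0$ for all $x>0$, with equality if and only if $x=x^*$.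
   Context: The Markov chain is the stochastic mass-action model of the network $\emptyset\xrightarrow{\kappa_1}X$, $2X\xrightarrow{\kappa_2}\emptyset$, with rate constants scaled as $\kappa_k^V=\kappa_k/V^{|\nu_k|-1}$ ($|\nu_k|$ = number of molecules consumed). *)

(* Defs.v *)
From Stdlib Require Import Reals Lra.
Open Scope R_scope.

Definition birth_rate (k1 V : R) (x : nat) : R := k1 * V.
Definition death_rate (k2 V : R) (x : nat) : R := k2 / V * INR x * (INR x - 1).

Definition stationary_dist (k1 k2 V : R) (p : nat -> R) : Prop :=
  (forall x, 0 <= p x) /\
  infinite_sum p 1 /\
  (forall x : nat,
     p x * (birth_rate k1 V x + death_rate k2 V x) =
     (match x with O => 0 | S y => p y * birth_rate k1 V y end)
     + p (x + 2)%nat * death_rate k2 V (x + 2)%nat).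

Definition gfun (k1 k2 : R) (x : R) : R :=
  let a := sqrt (k1 / k2) in
  2 * sqrt 2 * a - 2 * x * ln a + x * ln x - x * (1 + ln 2)
  - sqrt (x ^ 2 + 4 * a ^ 2) + x * ln (x + sqrt (x ^ 2 + 4 * a ^ 2)).

(* Main.v *)
Require Import Defs.
From Stdlib Require Import Reals Lra Lia Arith ZArith.
From Coquelicot Require Import Coquelicot.
Open Scope R_scope.


Definition SS (a x : R) := sqrt (x ^ 2 + 4 * a ^ 2).
Definition Gf (a x : R) := 2 * sqrt 2 * a - 2 * x * ln a + x * ln x - x * (1 + ln 2)
  - sqrt (x ^ 2 + 4 * a ^ 2) + x * ln (x + sqrt (x ^ 2 + 4 * a ^ 2)).
Definition g1f (a x : R) := ln x + ln (x + SS a x) - ln 2 - 2 * ln a.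
Definition g2f (a x : R) := / x + / SS a x.

Lemma SS_pos a x : 0 < a -> 0 < SS a x.
Proof. intros; unfold SS; apply sqrt_lt_R0; nra. Qed.
Lemma SS_sq a x : SS a x * SS a x = x ^ 2 + 4 * a ^ 2.
Proof. unfold SS; rewrite sqrt_sqrt; nra. Qed.
Lemma SS_gt a x : 0 < a -> x < SS a x.
Proof. intros ha. pose proof (SS_pos a x ha). pose proof (SS_sq a x).
  destruct (Rle_or_lt x 0); [lra|]. nra. Qed.

Lemma Gf_deriv a x : 0 < a -> 0 < x -> derivable_pt_lim (Gf a) x (g1f a x).
Proof.
  intros ha hx. apply is_derive_Reals. unfold Gf.
  pose proof (SS_pos a x ha) as hs. pose proof (SS_sq a x) as hsq.
  unfold SS in *.
  auto_derive.
  - replace (x*(x*1) + 4*(a*(a*1))) with (x^2+4*a^2) by ring. repeat split; try lra; nra.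
  - replace (x*(x*1) + 4*(a*(a*1))) with (x^2+4*a^2) by ring.
    unfold g1f, SS. set (s := sqrt (x^2+4*a^2)) in *.
    set (L1 := ln x). set (L2 := ln (x + s)). set (L3 := ln a). set (L4 := ln 2).
    field. lra.
Qed.

Lemma g1f_deriv a x : 0 < a -> 0 < x -> derivable_pt_lim (g1f a) x (g2f a x).
Proof.
  intros ha hx. apply is_derive_Reals. unfold g1f, g2f, SS.
  pose proof (SS_pos a x ha) as hs. pose proof (SS_sq a x) as hsq.
  pose proof (SS_gt a x ha) as hg. unfold SS in *.
  auto_derive.
  - replace (x*(x*1) + 4*(a*(a*1))) with (x^2+4*a^2) by ring. repeat split; try lra; nra.
  - replace (x*(x*1) + 4*(a*(a*1))) with (x^2+4*a^2) by ring.
    set (s := sqrt (x^2+4*a^2)) in *. field. lra.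
Qed.


Lemma SS_le a x y : 0 < x -> x <= y -> SS a x <= SS a y.
Proof. intros. unfold SS. apply sqrt_le_1_alt. nra. Qed.

Lemma g1f_lt a x y : 0 < a -> 0 < x -> x < y -> g1f a x < g1f a y.
Proof.
  intros ha hx hxy. unfold g1f.
  pose proof (SS_le a x y hx (Rlt_le _ _ hxy)).
  pose proof (SS_pos a x ha).
  pose proof (ln_increasing x y hx hxy).
  pose proof (ln_le (x + SS a x) (y + SS a y) ltac:(lra) ltac:(lra)). lra.
Qed.

Lemma g1f_le a x y : 0 < a -> 0 < x -> x <= y -> g1f a x <= g1f a y.
Proof. intros ha hx [h|h]. apply Rlt_le, g1f_lt; auto. subst; lra. Qed.

Lemma ln_sqrt2 : ln (sqrt 2) = ln 2 / 2.
Proof.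
  assert (h : ln (sqrt 2 * sqrt 2) = ln 2) by (rewrite sqrt_sqrt; lra).
  rewrite ln_mult in h by (apply sqrt_lt_R0; lra). lra.
Qed.

Lemma ln4 : ln 4 = 2 * ln 2.
Proof. replace 4 with (2*2) by ring. rewrite ln_mult by lra. ring. Qed.

Lemma a_of_z a z : 0 < a -> 0 < z -> 2 * z ^ 2 = a ^ 2 -> a = sqrt 2 * z.
Proof.
  intros ha hz h. symmetry. rewrite <- (sqrt_pow2 a) by lra. rewrite <- h.
  rewrite sqrt_mult by nra. rewrite sqrt_pow2 by lra. ring.
Qed.

Lemma SS_z a z : 0 < a -> 0 < z -> 2 * z ^ 2 = a ^ 2 -> SS a z = 3 * z.
Proof.
  intros ha hz h. unfold SS. replace (z^2+4*a^2) with ((3*z)^2) by nra.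
  apply sqrt_pow2; lra.
Qed.

Lemma g1f_z a z : 0 < a -> 0 < z -> 2 * z ^ 2 = a ^ 2 -> g1f a z = 0.
Proof.
  intros ha hz h. unfold g1f. rewrite (SS_z a z ha hz h).
  rewrite (a_of_z a z ha hz h). replace (z + 3*z) with (4*z) by ring.
  rewrite !ln_mult by (try apply sqrt_lt_R0; lra). rewrite ln_sqrt2, ln4. lra.
Qed.

Lemma Gf_z a z : 0 < a -> 0 < z -> 2 * z ^ 2 = a ^ 2 -> Gf a z = 0.
Proof.
  intros ha hz h. unfold Gf. fold (SS a z). rewrite (SS_z a z ha hz h).
  rewrite (a_of_z a z ha hz h). replace (z + 3*z) with (4*z) by ring.
  rewrite !ln_mult by (try apply sqrt_lt_R0; lra). rewrite ln_sqrt2, ln4.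
  replace (2 * sqrt 2 * (sqrt 2 * z)) with (2 * (sqrt 2 * sqrt 2) * z) by ring.
  rewrite sqrt_sqrt by lra. field.
Qed.

Lemma Gf_MVT a x y : 0 < a -> 0 < x -> x < y ->
  exists c, Gf a y - Gf a x = g1f a c * (y - x) /\ x < c < y.
Proof.
  intros ha hx hxy. apply MVT_cor2; auto.
  intros c hc. apply Gf_deriv; lra.
Qed.

Lemma Gf_incr_bounds a x y : 0 < a -> 0 < x -> x < y ->
  g1f a x * (y - x) <= Gf a y - Gf a x <= g1f a y * (y - x).
Proof.
  intros ha hx hxy. destruct (Gf_MVT a x y ha hx hxy) as [c [hc1 hc2]].
  rewrite hc1. pose proof (g1f_le a x c ha hx ltac:(lra)).
  pose proof (g1f_le a c y ha ltac:(lra) ltac:(lra)). split; nra.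
Qed.

Lemma Gf_pos a z x : 0 < a -> 0 < z -> 2 * z ^ 2 = a ^ 2 -> 0 < x -> x <> z -> 0 < Gf a x.
Proof.
  intros ha hz h hx hne. pose proof (g1f_z a z ha hz h) as g0.
  pose proof (Gf_z a z ha hz h) as G0.
  destruct (Rlt_or_le x z) as [l|l].
  - destruct (Gf_MVT a x z ha hx l) as [c [hc1 hc2]].
    pose proof (g1f_lt a c z ha ltac:(lra) ltac:(lra)). nra.
  - assert (l' : z < x) by lra.
    destruct (Gf_MVT a z x ha hz l') as [c [hc1 hc2]].
    pose proof (g1f_lt a z c ha ltac:(lra) ltac:(lra)). nra.
Qed.

Lemma Gf_nonneg a z x : 0 < a -> 0 < z -> 2 * z ^ 2 = a ^ 2 -> 0 < x -> 0 <= Gf a x.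
Proof.
  intros. destruct (Req_dec x z) as [e|e].
  - subst. rewrite Gf_z; auto; lra.
  - apply Rlt_le, (Gf_pos a z); auto.
Qed.

Lemma Gf_cont a x : 0 < a -> 0 < x -> forall eps, 0 < eps ->
  exists eta, 0 < eta /\ forall y, Rabs (y - x) < eta -> Rabs (Gf a y - Gf a x) < eps.
Proof.
  intros ha hx eps he.
  assert (hc : continuity_pt (Gf a) x).
  { apply derivable_continuous_pt. exists (g1f a x). apply Gf_deriv; auto. }
  destruct (hc eps he) as [al [hal H]].
  exists al. split; auto. intros y hy.
  destruct (Req_dec y x) as [e|e].
  - subst. rewrite Rminus_eq_0, Rabs_R0. auto.
  - apply (H y). split. split; [exact I| auto]. exact hy.
Qed.

Definition rho (a x : R) := 2 * a ^ 2 / (x * (x + SS a x)).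

Lemma div_le_cross a b c d : 0 < b -> 0 < d -> a * d <= c * b -> a / b <= c / d.
Proof.
  intros hb hd h. replace (a / b) with ((a * d) * / (b * d)) by (field; lra).
  replace (c / d) with ((c * b) * / (b * d)) by (field; lra).
  apply Rmult_le_compat_r; auto. apply Rlt_le, Rinv_0_lt_compat. nra.
Qed.

Lemma rho_pos a x : 0 < a -> 0 < x -> 0 < rho a x.
Proof.
  intros ha hx. unfold rho. pose proof (SS_pos a x ha).
  apply Rdiv_lt_0_compat; nra.
Qed.

Lemma ln_rho a x : 0 < a -> 0 < x -> ln (rho a x) = - g1f a x.
Proof.
  intros ha hx. unfold rho, g1f. pose proof (SS_pos a x ha).
  rewrite ln_div by nra. rewrite !ln_mult by nra. rewrite ln_pow by lra.
  simpl INR. ring.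
Qed.

Lemma rho_eq a x : 0 < a -> 0 < x -> x ^ 2 * rho a x * (1 + rho a x) = a ^ 2.
Proof.
  intros ha hx. unfold rho. pose proof (SS_pos a x ha). pose proof (SS_sq a x).
  pose proof (SS_gt a x ha).
  set (s := SS a x) in *. assert (key : (x+s)^2 = 2*(x*(x+s)+2*a^2)) by nra.
  transitivity (a^2 * (2*(x*(x+s)+2*a^2)) / (x+s)^2).
  { field. split; nra. }
  rewrite <- key. field. nra.
Qed.

Lemma rho_le a x : 0 < a -> 0 < x -> rho a x <= a ^ 2 / x ^ 2.
Proof.
  intros ha hx. pose proof (rho_eq a x ha hx). pose proof (rho_pos a x ha hx).
  rewrite <- (Rdiv_1_r (rho a x)) at 1. apply div_le_cross; nra.
Qed.

Lemma rho_ge a x : 0 < a -> 0 < x -> a ^ 2 / (x ^ 2 + a ^ 2) <= rho a x.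
Proof.
  intros ha hx. pose proof (rho_eq a x ha hx). pose proof (rho_pos a x ha hx).
  pose proof (rho_le a x ha hx).
  assert (rho a x * x^2 <= a^2).
  { apply (Rmult_le_reg_r (/ x^2)). apply Rinv_0_lt_compat; nra.
    replace (rho a x * x ^ 2 * / x ^ 2) with (rho a x) by (field; lra). exact H1. }
  rewrite <- (Rdiv_1_r (rho a x)). apply div_le_cross; nra.
Qed.

Lemma u_form a x : 0 < a -> 0 < x -> x ^ 2 * rho a x = 2 * a ^ 2 * x / (x + SS a x).
Proof. intros ha hx. unfold rho. pose proof (SS_gt a x ha). field. nra. Qed.

Lemma cross_SS a x y : 0 < a -> 0 < x -> x <= y -> x * SS a y <= y * SS a x.
Proof.
  intros ha hx hxy. pose proof (SS_sq a x). pose proof (SS_sq a y).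
  pose proof (SS_pos a x ha). pose proof (SS_pos a y ha).
  assert (h : (y * SS a x - x * SS a y) * (y * SS a x + x * SS a y) = 4 * a^2 * (y^2 - x^2)).
  { transitivity (y^2*(SS a x * SS a x) - x^2 * (SS a y * SS a y)). ring.
    rewrite H, H0. ring. }
  assert (x^2 <= y^2) by (apply pow_incr; lra).
  assert (0 <= 4 * a^2 * (y^2 - x^2)) by (apply Rmult_le_pos; nra).
  assert (0 < y * SS a x + x * SS a y) by nra. nra.
Qed.

Lemma u_mono a x y : 0 < a -> 0 < x -> x <= y -> x ^ 2 * rho a x <= y ^ 2 * rho a y.
Proof.
  intros ha hx hxy. rewrite !u_form by lra.
  pose proof (SS_gt a x ha). pose proof (SS_gt a y ha). pose proof (cross_SS a x y ha hx hxy).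
  apply div_le_cross; nra.
Qed.

Lemma u_ratio a x y : 0 < a -> 0 < x -> x <= y -> y ^ 2 * rho a y * x <= x ^ 2 * rho a x * y.
Proof.
  intros ha hx hxy. rewrite !u_form by lra.
  pose proof (SS_gt a x ha). pose proof (SS_gt a y ha). pose proof (SS_le a x y hx hxy).
  assert (h : 2 * a ^ 2 * y / (y + SS a y) * x <= 2 * a ^ 2 * x / (x + SS a x) * y).
  { replace (2 * a ^ 2 * y / (y + SS a y) * x) with ((2*a^2*x*y)/(y + SS a y)) by (field; lra).
    replace (2 * a ^ 2 * x / (x + SS a x) * y) with ((2*a^2*x*y)/(x + SS a x)) by (field; lra).
    apply div_le_cross; try lra. assert (0 <= 2*a^2*x*y) by (repeat apply Rmult_le_pos; nra). nra. }
  exact h.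
Qed.

Lemma contr_aux c d s t T : 0 <= c -> 0 < d -> 0 < s -> s < t -> t <= T ->
  0 <= ln (c + d * t) - ln (c + d * s) <= d * T / (c + d * T) * (ln t - ln s).
Proof.
  intros hc hd hs hst htT.
  set (f := fun u => ln (c + d * exp u)).
  set (f' := fun u => d * exp u / (c + d * exp u)).
  assert (hl : ln s < ln t) by (apply ln_increasing; lra).
  destruct (MVT_cor2 f f' (ln s) (ln t) hl) as [xi [e hxi]].
  { intros u hu. apply is_derive_Reals. unfold f, f'. auto_derive.
    pose proof (exp_pos u). nra. field. pose proof (exp_pos u). nra. }
  unfold f, f' in e. rewrite !exp_ln in e by lra.
  rewrite e. pose proof (exp_pos xi) as hE.
  assert (hEt : exp xi <= t).
  { rewrite <- (exp_ln t) by lra. apply Rlt_le, exp_increasing. lra. }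
  assert (h1 : 0 <= d * exp xi / (c + d * exp xi)) by (apply Rdiv_le_0_compat; nra).
  assert (h2 : d * exp xi / (c + d * exp xi) <= d * T / (c + d * T)).
  { apply div_le_cross; try nra.
    assert (0 <= d*c*(T - exp xi)) by (apply Rmult_le_pos; [apply Rmult_le_pos|]; lra). nra. }
  split; nra.
Qed.

Lemma contraction c d s t T : 0 <= c -> 0 < d -> 0 < s -> 0 < t -> s <= T -> t <= T ->
  Rabs (ln (c + d * s) - ln (c + d * t)) <= d * T / (c + d * T) * Rabs (ln s - ln t).
Proof.
  intros hc hd hs ht hsT htT.
  destruct (Rtotal_order s t) as [l|[e|l]].
  - destruct (contr_aux c d s t T hc hd hs l htT).
    assert (ln s < ln t) by (apply ln_increasing; lra).
    rewrite Rabs_minus_sym, (Rabs_minus_sym (ln s)). rewrite !Rabs_right by lra. lra.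
  - subst. rewrite !Rminus_eq_0, !Rabs_R0. lra.
  - destruct (contr_aux c d t s T hc hd ht l hsT).
    assert (ln t < ln s) by (apply ln_increasing; lra).
    rewrite !Rabs_right by lra. lra.
Qed.


Lemma cut_raw k1 k2 V p : stationary_dist k1 k2 V p -> forall n,
  p n * (k1 * V) = p (S n) * death_rate k2 V (S n) + p (S (S n)) * death_rate k2 V (S (S n)).
Proof.
  intros [_ [_ hb]] n. induction n.
  - pose proof (hb 0%nat) as h. simpl in h. unfold birth_rate, death_rate in *. simpl in *. lra.
  - pose proof (hb (S n)) as h. replace (S n + 2)%nat with (S (S (S n))) in h by lia.
    unfold birth_rate in *. lra.
Qed.

Lemma cutN k1 k2 V p : 0 < k2 -> 0 < V -> stationary_dist k1 k2 V p -> forall n,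
  p n * (k1 / k2 * V ^ 2) = p (S n) * (INR n * (INR n + 1))
     + p (S (S n)) * ((INR n + 1) * (INR n + 2)).
Proof.
  intros hk2 hV hs n. pose proof (cut_raw k1 k2 V p hs n) as h.
  unfold death_rate in h. rewrite !S_INR in h.
  apply (Rmult_eq_reg_r (k2 / V)); [| apply Rgt_not_eq, Rdiv_lt_0_compat; lra].
  replace (p n * (k1 / k2 * V ^ 2) * (k2 / V)) with (p n * (k1 * V)) by (field; lra).
  rewrite h. field. lra.
Qed.

Lemma pos_gen (p : nat -> R) (C : R) : 0 < C -> (forall n, 0 <= p n) ->
  (forall n, p n * C = p (S n) * (INR n * (INR n + 1)) + p (S (S n)) * ((INR n + 1) * (INR n + 2))) ->
  ~ (forall n, p n = 0) -> forall n, 0 < p n.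
Proof.
  intros hC hp hcut hnz.
  assert (hpos : forall n, 0 <= INR n) by (intro; apply pos_INR).
  assert (up : forall n, p (S n) = 0 -> p (S (S n)) = 0).
  { intros n h. pose proof (hcut (S n)) as c. rewrite h in c. rewrite S_INR in c.
    pose proof (hp (S (S n))). pose proof (hp (S (S (S n)))). pose proof (hpos n).
    assert (0 <= p (S (S (S n))) * ((INR n + 1 + 1) * (INR n + 1 + 2))) by (apply Rmult_le_pos; nra).
    assert (0 <= p (S (S n)) * ((INR n + 1) * (INR n + 1 + 1))) by (apply Rmult_le_pos; nra).
    assert (e : p (S (S n)) * ((INR n + 1) * (INR n + 1 + 1)) = 0) by lra.
    apply Rmult_integral in e. destruct e as [e|e]; auto. nra. }
  assert (down : forall n, p (S n) = 0 -> p n = 0).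
  { intros n h. pose proof (up n h) as h2. pose proof (hcut n) as c. rewrite h, h2 in c.
    assert (e : p n * C = 0) by lra. apply Rmult_integral in e. destruct e; auto. lra. }
  assert (to0 : forall n, p n = 0 -> p 0%nat = 0).
  { induction n; auto. }
  assert (all : p 0%nat = 0 -> forall n, p n = 0).
  { intros h0. assert (h2 : p 2%nat = 0).
    { pose proof (hcut 0%nat) as c. rewrite h0 in c. simpl in c.
      assert (e : p 2%nat * 2 = 0) by lra. apply Rmult_integral in e. destruct e; auto; lra. }
    assert (h1 : p 1%nat = 0) by (apply down; exact h2).
    assert (hs : forall n, p (S n) = 0).
    { induction n; auto. }
    intros [|n]; auto. }
  intros n. destruct (hp n) as [l|e]; auto. exfalso. apply hnz, all, (to0 n). auto.
Qed.

Lemma sum_mono (p : nat -> R) : (forall n, 0 <= p n) -> forall n m, (n <= m)%nat ->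
  sum_f_R0 p n <= sum_f_R0 p m.
Proof.
  intros hp n m h. induction h. lra. simpl. pose proof (hp (S m)). lra.
Qed.

Lemma sum_le_lim (p : nat -> R) l : (forall n, 0 <= p n) -> infinite_sum p l ->
  forall n, sum_f_R0 p n <= l.
Proof.
  intros hp hl n. destruct (Rle_or_lt (sum_f_R0 p n) l) as [h|h]; auto.
  destruct (hl (sum_f_R0 p n - l)) as [N HN]; [lra|].
  pose proof (HN (max n N) (Nat.le_max_r _ _)) as H. unfold R_dist in H.
  pose proof (sum_mono p hp n (max n N) (Nat.le_max_l _ _)).
  rewrite Rabs_right in H by lra. lra.
Qed.

Lemma lim_le_bound (p : nat -> R) l B : infinite_sum p l ->
  (forall n, sum_f_R0 p n <= B) -> l <= B.
Proof.
  intros hl hB. destruct (Rle_or_lt l B) as [h|h]; auto.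
  destruct (hl (l - B)) as [N HN]; [lra|].
  pose proof (HN N (le_n N)) as H. unfold R_dist in H. pose proof (hB N).
  rewrite Rabs_minus_sym, Rabs_right in H by lra. lra.
Qed.

Lemma term_le_sum (p : nat -> R) : (forall n, 0 <= p n) -> forall n, p n <= sum_f_R0 p n.
Proof. intros hp [|n]; simpl. lra. pose proof (sum_mono p hp 0 n ltac:(lia)). simpl in H.
  pose proof (hp 0%nat). lra. Qed.

Lemma stat_pos k1 k2 V p : 0 < k1 -> 0 < k2 -> 0 < V -> stationary_dist k1 k2 V p ->
  forall n, 0 < p n.
Proof.
  intros hk1 hk2 hV hs. apply (pos_gen p (k1 / k2 * V ^ 2)).
  - apply Rmult_lt_0_compat. apply Rdiv_lt_0_compat; lra. apply pow_lt; lra.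
  - apply hs.
  - apply cutN; auto.
  - intros h0. destruct hs as [_ [hl _]].
    assert (e : forall n, sum_f_R0 p n = 0).
    { induction n; simpl; rewrite h0; [lra|]. rewrite IHn. lra. }
    destruct (hl (1/2)) as [N HN]; [lra|]. pose proof (HN N (le_n _)) as H.
    unfold R_dist in H. rewrite e in H. rewrite Rabs_left in H; lra.
Qed.

Lemma stat_le1 k1 k2 V p : stationary_dist k1 k2 V p -> forall n, p n <= 1.
Proof.
  intros [hp [hl _]] n. pose proof (term_le_sum p hp n). pose proof (sum_le_lim p 1 hp hl n). lra.
Qed.

Lemma ratio_rel (p : nat -> R) C : (forall n, 0 < p n) ->
  (forall n, p n * C = p (S n) * (INR n * (INR n + 1)) + p (S (S n)) * ((INR n + 1) * (INR n + 2))) ->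
  forall n, p (S n) / p n * (INR n * (INR n + 1) + p (S (S n)) / p (S n) * ((INR n + 1) * (INR n + 2))) = C.
Proof.
  intros hp hc n. pose proof (hp n). pose proof (hp (S n)).
  apply (Rmult_eq_reg_r (p n)); [|lra]. rewrite (Rmult_comm C (p n)), hc. field. lra.
Qed.

Lemma ratio_up (p : nat -> R) C : (forall n, 0 < p n) ->
  (forall n, p n * C = p (S n) * (INR n * (INR n + 1)) + p (S (S n)) * ((INR n + 1) * (INR n + 2))) ->
  forall n, p (S n) / p n * (INR n * (INR n + 1)) <= C.
Proof.
  intros hp hc n. rewrite <- (ratio_rel p C hp hc n).
  pose proof (hp n). pose proof (hp (S n)). pose proof (hp (S (S n))). pose proof (pos_INR n).
  assert (0 <= p (S n) / p n) by (apply Rlt_le, Rdiv_lt_0_compat; lra).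
  assert (0 <= p (S (S n)) / p (S n)) by (apply Rlt_le, Rdiv_lt_0_compat; lra).
  assert (0 <= p (S (S n)) / p (S n) * ((INR n + 1) * (INR n + 2))) by (apply Rmult_le_pos; nra).
  nra.
Qed.

Lemma ratio_lo (p : nat -> R) C : (forall n, 0 < p n) ->
  (forall n, p n * C = p (S n) * (INR n * (INR n + 1)) + p (S (S n)) * ((INR n + 1) * (INR n + 2))) ->
  forall n, C <= p (S n) / p n * (INR n * (INR n + 1) + C).
Proof.
  intros hp hc n. pose proof (ratio_up p C hp hc (S n)) as h. rewrite S_INR in h.
  rewrite <- (ratio_rel p C hp hc n) at 1.
  pose proof (hp n). pose proof (hp (S n)).
  assert (0 <= p (S n) / p n) by (apply Rlt_le, Rdiv_lt_0_compat; lra).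
  replace ((INR n + 1) * (INR n + 2)) with ((INR n + 1) * (INR n + 1 + 1)) by ring.
  apply Rmult_le_compat_l; auto. lra.
Qed.


Lemma ln_1p_le t : 0 < t -> ln (1 + t) <= t.
Proof.
  intros ht. pose proof (exp_ineq1 t ltac:(lra)).
  rewrite <- (ln_exp t) at 2. apply Rlt_le, ln_increasing; lra.
Qed.

Lemma ln_abs_le lo hi s t : 0 < lo -> lo <= s <= hi -> lo <= t <= hi ->
  Rabs (ln s - ln t) <= ln hi - ln lo.
Proof.
  intros hlo hs ht.
  assert (ln lo <= ln s <= ln hi) by (split; apply ln_le; lra).
  assert (ln lo <= ln t <= ln hi) by (split; apply ln_le; lra).
  apply Rabs_le. lra.
Qed.

Definition hyp_cut (a V : R) (p : nat -> R) :=
  forall n, p n * (a ^ 2 * V ^ 2) = p (S n) * (INR n * (INR n + 1))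
     + p (S (S n)) * ((INR n + 1) * (INR n + 2)).

Definition rr (p : nat -> R) n := p (S n) / p n.
Definition ee a V p n := Rabs (ln (rr p n) - ln (rho a (INR n / V))).

Lemma eta_bound a V N : 0 < a -> 0 < V -> 1 <= N ->
  let s := rho a ((N + 1) / V) in
  let F := a^2 * V^2 / (N * (N + 1) + s * ((N + 1) * (N + 2))) in
  Rabs (ln F - ln (rho a (N / V))) <= 2 / N.
Proof.
  intros ha hV hN s F.
  set (x := N / V). set (y := (N+1)/V). set (rx := rho a x).
  assert (hx : 0 < x) by (unfold x; apply Rdiv_lt_0_compat; lra).
  assert (hy : x <= y) by (unfold x, y; apply Rmult_le_compat_r; [apply Rlt_le, Rinv_0_lt_compat|]; lra).
  assert (hrx : 0 < rx) by (apply rho_pos; auto).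
  assert (hxy : x <= y) by (unfold x, y, Rdiv; apply Rmult_le_compat_r; [left; apply Rinv_0_lt_compat; lra | lra]).
  pose proof (rho_eq a x ha hx) as Ex. fold rx in Ex.
  pose proof (u_mono a x y ha hx hxy) as Um. fold rx in Um. fold s in Um.
  pose proof (u_ratio a x y ha hx hxy) as Ur. fold rx in Ur. fold s in Ur.
  assert (Ex' : N^2 * rx * (1 + rx) = a^2 * V^2).
  { rewrite <- Ex. unfold x. field. lra. }
  assert (Um' : N^2 * rx <= (N+1)^2 * s).
  { apply (Rmult_le_reg_r (/ V^2)). apply Rinv_0_lt_compat, pow_lt; lra.
    replace (N^2 * rx * / V^2) with (x^2 * rx) by (unfold x; field; lra).
    replace ((N+1)^2 * s * / V^2) with (y^2 * s) by (unfold y; field; lra). exact Um. }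
  assert (Ur' : (N+1) * s <= N * rx).
  { apply (Rmult_le_reg_r (N * (N+1) / V^3)). apply Rdiv_lt_0_compat; [nra|apply pow_lt; lra].
    replace ((N+1) * s * (N * (N+1) / V^3)) with (y^2 * s * x) by (unfold x, y; field; lra).
    replace (N * rx * (N * (N+1) / V^3)) with (x^2 * rx * y) by (unfold x, y; field; lra).
    exact Ur. }
  assert (D1 : N^2 * (1 + rx) <= N * (N + 1) + s * ((N + 1) * (N + 2))) by nra.
  assert (D2 : N * (N + 1) + s * ((N + 1) * (N + 2)) <= (N+1)^2 * (1 + rx)).
  { assert (s * ((N + 1) * (N + 2)) <= N * rx * (N+2)) by nra. nra. }
  assert (F1 : F <= rx).
  { unfold F. rewrite <- Ex'. apply (Rle_trans _ (N^2*rx*(1+rx) / (N^2*(1+rx)))).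
    assert (0 <= N ^ 2 * rx * (1 + rx)) by (apply Rmult_le_pos; nra).
    apply div_le_cross; [nra|nra|apply Rmult_le_compat_l; [lra|exact D1]].
    right; field; lra. }
  assert (F2 : rx * (N^2 / (N+1)^2) <= F).
  { unfold F. rewrite <- Ex'. 
    replace (rx * (N ^ 2 / (N + 1) ^ 2)) with (N^2 * rx * (1 + rx) / ((N+1)^2 * (1+rx)))
      by (field; lra).
    assert (0 <= N ^ 2 * rx * (1 + rx)) by (apply Rmult_le_pos; nra).
    apply div_le_cross; [nra|nra|apply Rmult_le_compat_l; [lra|exact D2]]. }
  assert (hF : 0 < F) by (unfold F; apply Rdiv_lt_0_compat; nra).
  assert (L1 : ln F <= ln rx) by (apply ln_le; lra).
  assert (L2 : ln (rx * (N^2 / (N+1)^2)) <= ln F) by (apply ln_le; auto; apply Rmult_lt_0_compat; auto; apply Rdiv_lt_0_compat; nra).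
  rewrite ln_mult in L2; [| lra | apply Rdiv_lt_0_compat; apply pow_lt; lra].
  rewrite ln_div in L2; [| apply pow_lt; lra | apply pow_lt; lra].
  replace ((N+1)^2) with ((1 + /N)^2 * N^2) in L2 by (field; lra).
  assert (hiN : 0 < /N) by (apply Rinv_0_lt_compat; lra).
  rewrite ln_mult in L2; [| apply pow_lt; lra | apply pow_lt; lra].
  rewrite !ln_pow in L2 by (try apply Rplus_lt_0_compat; try apply Rinv_0_lt_compat; lra).
  pose proof (ln_1p_le (/N) ltac:(apply Rinv_0_lt_compat; lra)).
  simpl INR in L2. apply Rabs_le. unfold Rdiv. lra.
Qed.

Definition theta a V (N : R) :=
  (N + 1) * (N + 2) * (a^2 * V^2 / (N+1)^2) /
  (N * (N + 1) + (N + 1) * (N + 2) * (a^2 * V^2 / (N+1)^2)).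

Lemma step a V p : 0 < a -> 0 < V -> (forall n, 0 < p n) -> hyp_cut a V p ->
  forall n, 1 <= INR n -> ee a V p n <= theta a V (INR n) * ee a V p (S n) + 2 / INR n.
Proof.
  intros ha hV hp hc n hn. set (N := INR n) in *.
  pose proof (ratio_rel p (a^2*V^2) hp hc n) as R. fold N in R.
  pose proof (ratio_up p (a^2*V^2) hp hc (S n)) as U. rewrite S_INR in U. fold N in U.
  fold (rr p n) in R. fold (rr p (S n)) in R, U.
  set (r0 := rr p n) in *. set (r1 := rr p (S n)) in *.
  assert (hr0 : 0 < r0) by (unfold r0, rr; apply Rdiv_lt_0_compat; auto).
  assert (hr1 : 0 < r1) by (unfold r1, rr; apply Rdiv_lt_0_compat; auto).
  set (s := rho a ((N + 1) / V)).
  assert (hs : 0 < s) by (apply rho_pos; auto; apply Rdiv_lt_0_compat; lra).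
  set (c := N * (N+1)). set (d := (N+1)*(N+2)). set (T := a^2 * V^2 / (N+1)^2).
  assert (hT1 : r1 <= T).
  { unfold T. apply (Rmult_le_reg_r ((N+1)^2)). nra.
    replace (a ^ 2 * V ^ 2 / (N + 1) ^ 2 * (N + 1) ^ 2) with (a^2*V^2) by (field; lra). nra. }
  assert (hT2 : s <= T).
  { unfold s, T. eapply Rle_trans. apply rho_le; auto. apply Rdiv_lt_0_compat; lra.
    right. field. lra. }
  assert (Er0 : r0 = a^2 * V^2 / (c + d * r1)).
  { unfold c, d. rewrite <- R. field. nra. }
  pose proof (eta_bound a V N ha hV hn) as Eb. simpl in Eb. fold s in Eb.
  fold c d in Eb.
  pose proof (contraction c d s r1 T ltac:(unfold c; nra) ltac:(unfold d; nra) hs hr1 hT2 hT1) as Ct.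
  assert (hC : 0 < a^2 * V^2) by (apply Rmult_lt_0_compat; apply pow_lt; lra).
  assert (hcd1 : 0 < c + d * r1) by (unfold c, d; nra).
  assert (hcd2 : 0 < c + s * d) by (unfold c, d; nra).
  assert (E1 : ln r0 - ln (a ^ 2 * V ^ 2 / (c + s * d)) = ln (c + d * s) - ln (c + d * r1)).
  { rewrite Er0. rewrite !ln_div by lra. rewrite (Rmult_comm s d). ring. }
  unfold ee. fold r0. fold N. rewrite S_INR. fold N. fold r1. fold s.
  replace (ln r0 - ln (rho a (N / V))) with
    ((ln r0 - ln (a ^ 2 * V ^ 2 / (c + s * d))) + (ln (a ^ 2 * V ^ 2 / (c + s * d)) - ln (rho a (N / V)))) by ring.
  eapply Rle_trans. apply Rabs_triang. rewrite E1.
  replace (theta a V N) with (d * T / (c + d * T)) by (unfold theta, c, d, T; reflexivity).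
  rewrite (Rabs_minus_sym (ln r1)). apply Rplus_le_compat; auto.
Qed.

Lemma theta_bound a V N dl : 0 < a -> 0 < V -> 0 < dl -> 1 <= N -> dl * V <= N ->
  0 <= theta a V N <= 3 * a^2 / (3 * a^2 + dl^2).
Proof.
  intros ha hV hd hN hdN. unfold theta.
  set (T := a ^ 2 * V ^ 2 / (N + 1) ^ 2).
  assert (hT : 0 < T) by (unfold T; apply Rdiv_lt_0_compat; [apply Rmult_lt_0_compat; apply pow_lt|apply pow_lt]; lra).
  split. apply Rdiv_le_0_compat; nra.
  apply div_le_cross; try nra.
  assert (E : (N+1)*(N+2)*T*dl^2 = (N+2)/(N+1) * a^2 * (dl*V)^2).
  { unfold T. field. lra. }
  assert (h1 : (dl*V)^2 <= N^2) by (apply pow_incr; nra).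
  assert (h2 : (N+2)/(N+1) <= 2).
  { apply (Rmult_le_reg_r (N+1)); [lra|]. replace ((N + 2) / (N + 1) * (N + 1)) with (N+2) by (field; lra). lra. }
  assert (h3 : 0 <= (N+2)/(N+1)) by (apply Rdiv_le_0_compat; lra).
  assert (h4 : (N+1)*(N+2)*T*dl^2 <= 2 * a^2 * N^2).
  { rewrite E. assert (0 <= a^2) by nra. 
    apply Rle_trans with (2 * a^2 * (dl*V)^2).
    - apply Rmult_le_compat_r. nra. apply Rmult_le_compat_r; nra.
    - nra. }
  nra.
Qed.

Lemma iterate (e : nat -> R) (q : R) n : 0 <= q < 1 -> 1 <= INR n -> (forall m, 0 <= e m) ->
  (forall m, (n <= m)%nat -> e m <= q * e (S m) + 2 / INR m) ->
  forall K, e n <= q ^ K * e (n + K)%nat + 2 / (INR n * (1 - q)).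
Proof.
  intros hq hn he H K. revert n hn H. induction K; intros n hn H.
  - rewrite Nat.add_0_r. simpl. assert (0 < 2 / (INR n * (1-q))) by (apply Rdiv_lt_0_compat; nra). lra.
  - assert (hn' : 1 <= INR (S n)) by (rewrite S_INR; lra).
    assert (H' : forall m, (S n <= m)%nat -> e m <= q * e (S m) + 2 / INR m) by (intros; apply H; lia).
    pose proof (IHK (S n) hn' H') as IH. replace (S n + K)%nat with (n + S K)%nat in IH by lia.
    pose proof (H n (le_n n)) as Hn. rewrite S_INR in IH.
    assert (A : 2 / ((INR n + 1) * (1 - q)) <= 2 / (INR n * (1 - q))).
    { apply div_le_cross; nra. }
    simpl. 
    assert (B : q * (2 / (INR n * (1 - q))) + 2 / INR n = 2 / (INR n * (1 - q))) by (field; split; lra).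
    nra.
Qed.

Lemma crude a V p : 0 < a -> 0 < V -> (forall n, 0 < p n) -> hyp_cut a V p ->
  forall m, 1 <= INR m -> ee a V p m <= 1 + a^2 * V^2 / (INR m)^2.
Proof.
  intros ha hV hp hc m hm. set (M := INR m) in *. set (C := a^2 * V^2).
  assert (hC : 0 < C) by (apply Rmult_lt_0_compat; apply pow_lt; lra).
  pose proof (ratio_up p C hp hc m) as U. pose proof (ratio_lo p C hp hc m) as L.
  fold M in U, L. fold (rr p m) in U, L.
  assert (hr : 0 < rr p m) by (unfold rr; apply Rdiv_lt_0_compat; auto).
  set (lo := C / (M * (M+1) + C)). set (hi := C / M^2).
  assert (hlo : 0 < lo) by (unfold lo; apply Rdiv_lt_0_compat; nra).
  assert (Hr : lo <= rr p m <= hi).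
  { split.
    - unfold lo. rewrite <- (Rdiv_1_r (rr p m)). apply div_le_cross; nra.
    - unfold hi. rewrite <- (Rdiv_1_r (rr p m)). apply div_le_cross; nra. }
  assert (hx : 0 < M / V) by (apply Rdiv_lt_0_compat; lra).
  assert (Hs : lo <= rho a (M / V) <= hi).
  { split.
    - eapply Rle_trans; [|apply rho_ge; auto]. unfold lo.
      replace (a ^ 2 / ((M / V) ^ 2 + a ^ 2)) with (C / (M^2 + C)) by (unfold C; field; repeat split; nra).
      apply div_le_cross; nra.
    - eapply Rle_trans; [apply rho_le; auto|]. unfold hi, C. right. field. lra. }
  unfold ee. fold M. eapply Rle_trans. apply (ln_abs_le lo hi); auto.
  unfold lo, hi. rewrite !ln_div by nra. 
  replace (M * (M + 1) + C) with (M^2 * (1 + (M + C) / M^2)) by (field; lra).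
  rewrite ln_mult by (try apply pow_lt; try (apply Rplus_lt_0_compat; [lra|apply Rdiv_lt_0_compat]); nra).
  pose proof (ln_1p_le ((M + C) / M^2) ltac:(apply Rdiv_lt_0_compat; nra)).
  assert ((M + C) / M^2 <= 1 + C / M^2).
  { replace ((M + C) / M^2) with (/M + C / M^2) by (field; lra).
    assert (/M <= 1). { rewrite <- Rinv_1. apply Rinv_le_contravar; lra. } lra. }
  fold C. lra.
Qed.

Lemma ratio_lemma a dl eps : 0 < a -> 0 < dl -> 0 < eps -> exists n0, forall V p,
  0 < V -> (forall n, 0 < p n) -> hyp_cut a V p ->
  forall n, (n0 <= n)%nat -> dl * V <= INR n -> ee a V p n <= eps.
Proof.
  intros ha hd he. set (q := 3 * a^2 / (3 * a^2 + dl^2)).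
  assert (hq : 0 <= q < 1).
  { unfold q. split. apply Rdiv_le_0_compat; nra.
    apply (Rmult_lt_reg_r (3 * a^2 + dl^2)); [nra|].
    replace (3 * a ^ 2 / (3 * a ^ 2 + dl ^ 2) * (3 * a ^ 2 + dl ^ 2)) with (3 * a^2) by (field; nra). nra. }
  set (K0 := 1 + a^2 / (4 * dl^2)).
  assert (hK0 : 1 <= K0) by (unfold K0; assert (0 <= a^2/(4*dl^2)) by (apply Rdiv_le_0_compat; nra); lra).
  destruct (pow_lt_1_zero q ltac:(rewrite Rabs_right; lra) (eps / 2 / K0)) as [n1 Hn1].
  { apply Rdiv_lt_0_compat; lra. }
  destruct (archimed_cor1 (eps * (1 - q) / 4)) as [n2 [Hn2 Hn2']].
  { apply Rdiv_lt_0_compat; nra. }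
  exists (max n1 (max n2 1)). intros V p hV hp hc n hn hdn.
  set (N := INR n) in *.
  assert (hN1 : 1 <= N) by (unfold N; replace 1 with (INR 1) by reflexivity; apply le_INR; lia).
  assert (hN2 : INR n2 <= N) by (apply le_INR; lia).
  assert (hee : forall m, 0 <= ee a V p m) by (intro; apply Rabs_pos).
  pose proof (iterate (ee a V p) q n hq hN1 hee) as It.
  assert (Hstep : forall m, (n <= m)%nat -> ee a V p m <= q * ee a V p (S m) + 2 / INR m).
  { intros m hm. assert (hm' : N <= INR m) by (apply le_INR; auto).
    pose proof (step a V p ha hV hp hc m ltac:(lra)) as St.
    pose proof (theta_bound a V (INR m) dl ha hV hd ltac:(lra) ltac:(lra)) as Tb.
    fold q in Tb. pose proof (hee (S m)). nra. }
  specialize (It Hstep n).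
  assert (hc2 : ee a V p (n + n) <= K0).
  { assert (h2n : INR (n + n) = 2 * N) by (rewrite plus_INR; unfold N; ring).
    eapply Rle_trans. apply crude; auto. rewrite h2n; lra.
    rewrite h2n. unfold K0. apply Rplus_le_compat_l.
    apply div_le_cross; try nra. assert (dl^2 * V^2 <= N^2) by (rewrite <- Rpow_mult_distr; apply pow_incr; nra).
    nra. }
  assert (hqn : q ^ n < eps / 2 / K0).
  { pose proof (Hn1 n ltac:(lia)) as H. rewrite Rabs_right in H; auto. apply Rle_ge, pow_le; lra. }
  assert (hqn0 : 0 <= q ^ n) by (apply pow_le; lra).
  assert (T1 : q ^ n * ee a V p (n + n) <= eps / 2).
  { apply Rle_trans with (q ^ n * K0). apply Rmult_le_compat_l; auto.
    apply Rlt_le. apply (Rmult_lt_reg_r (/ K0)). apply Rinv_0_lt_compat; lra.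
    replace (q ^ n * K0 * / K0) with (q ^ n) by (field; lra). unfold Rdiv in hqn. lra. }
  assert (T2 : 2 / (N * (1 - q)) <= eps / 2).
  { assert (/ N <= / INR n2) by (apply Rinv_le_contravar; [apply lt_0_INR; auto|auto]).
    replace (2 / (N * (1 - q))) with (2 * / N / (1 - q)) by (field; split; lra).
    apply (Rmult_le_reg_r (1 - q)); [lra|].
    replace (2 * / N / (1 - q) * (1 - q)) with (2 * / N) by (field; lra). nra. }
  change (INR n) with N in It. lra.
Qed.


Definition Psi a V (p : nat -> R) n := ln (p n) + V * Gf a (INR n / V).

Lemma psi_step a V p j eps : 0 < a -> 0 < V -> (forall n, 0 < p n) -> 1 <= INR j ->
  ee a V p j <= eps ->
  - eps <= Psi a V p (S j) - Psi a V p j <= eps + g1f a (INR (S j) / V) - g1f a (INR j / V).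
Proof.
  intros ha hV hp hj he. unfold Psi, ee, rr in *. rewrite S_INR in *.
  set (x := INR j / V) in *. set (y := (INR j + 1) / V).
  assert (hx : 0 < x) by (unfold x; apply Rdiv_lt_0_compat; lra).
  assert (hxy : x < y) by (unfold x, y, Rdiv; apply Rmult_lt_compat_r; [apply Rinv_0_lt_compat|]; lra).
  pose proof (Gf_incr_bounds a x y ha hx hxy) as Gb.
  assert (hyx : y - x = / V) by (unfold x, y; field; lra).
  rewrite hyx in Gb.
  assert (Gb' : g1f a x <= V * (Gf a y - Gf a x) <= g1f a y).
  { destruct Gb as [G1 G2]. split.
    - apply (Rmult_le_compat_l V) in G1; [|lra]. replace (V * (g1f a x * / V)) with (g1f a x) in G1 by (field; lra). lra.
    - apply (Rmult_le_compat_l V) in G2; [|lra]. replace (V * (g1f a y * / V)) with (g1f a y) in G2 by (field; lra). lra. }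
  pose proof (hp j). pose proof (hp (S j)).
  rewrite ln_div in he by auto. rewrite ln_rho in he by auto.
  apply Rabs_le_between in he. split; nra.
Qed.

Lemma psi_tele a V p m eps : 0 < a -> 0 < V -> (forall n, 0 < p n) -> 1 <= INR m ->
  (forall j, (m <= j)%nat -> ee a V p j <= eps) -> forall K,
  - (INR K * eps) <= Psi a V p (m + K) - Psi a V p m
    <= INR K * eps + g1f a (INR (m + K) / V) - g1f a (INR m / V).
Proof.
  intros ha hV hp hm H K. induction K.
  - rewrite Nat.add_0_r. simpl. lra.
  - assert (hj : 1 <= INR (m + K)) by (eapply Rle_trans; [exact hm| apply le_INR; lia]).
    pose proof (psi_step a V p (m + K) eps ha hV hp hj (H (m + K)%nat ltac:(lia))) as St.
    replace (m + S K)%nat with (S (m + K)) by lia. rewrite S_INR. lra.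
Qed.

Lemma psi_cmp a V p m0 eps j k : 0 < a -> 0 < V -> (forall n, 0 < p n) -> 1 <= INR m0 -> 0 <= eps ->
  (forall i, (m0 <= i)%nat -> ee a V p i <= eps) -> (m0 <= j)%nat -> (m0 <= k)%nat ->
  Psi a V p k <= Psi a V p j + (INR j + INR k) * eps + Rabs (g1f a (INR k / V) - g1f a (INR j / V)).
Proof.
  intros ha hV hp hm0 he H hj hk.
  assert (Hj : forall i, (j <= i)%nat -> ee a V p i <= eps) by (intros; apply H; lia).
  assert (Hk : forall i, (k <= i)%nat -> ee a V p i <= eps) by (intros; apply H; lia).
  assert (hj1 : 1 <= INR j) by (eapply Rle_trans; [exact hm0|apply le_INR; auto]).
  assert (hk1 : 1 <= INR k) by (eapply Rle_trans; [exact hm0|apply le_INR; auto]).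
  pose proof (Rle_abs (g1f a (INR k / V) - g1f a (INR j / V))).
  pose proof (Rabs_pos (g1f a (INR k / V) - g1f a (INR j / V))).
  destruct (le_lt_dec j k) as [l|l].
  - destruct (psi_tele a V p j eps ha hV hp hj1 Hj (k - j)) as [_ T].
    replace (j + (k - j))%nat with k in T by lia.
    assert (INR (k - j) <= INR k) by (apply le_INR; lia).
    assert (INR (k - j) * eps <= INR k * eps) by (apply Rmult_le_compat_r; auto).
    assert (0 <= INR j * eps) by (apply Rmult_le_pos; auto; apply pos_INR). nra.
  - destruct (psi_tele a V p k eps ha hV hp hk1 Hk (j - k)) as [T _].
    replace (k + (j - k))%nat with j in T by lia.
    assert (INR (j - k) <= INR j) by (apply le_INR; lia).
    assert (INR (j - k) * eps <= INR j * eps) by (apply Rmult_le_compat_r; auto).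
    assert (0 <= INR k * eps) by (apply Rmult_le_pos; auto; apply pos_INR). nra.
Qed.

Lemma mass (p : nat -> R) nlo nhi c : (nlo <= nhi)%nat -> (forall n, 0 <= p n) -> infinite_sum p 1 ->
  (forall j, (j < nlo)%nat -> p j <= 2 * p (S j)) ->
  (forall j, (nhi <= j)%nat -> 2 * p (S j) <= p j) ->
  (forall j, (nlo <= j <= nhi)%nat -> p j <= c) ->
  1 <= (INR nhi + 3) * 2 ^ nlo * c.
Proof.
  intros hle hp hs Hlo Hhi Hw.
  assert (hc : 0 <= c) by (eapply Rle_trans; [apply (hp nlo)| apply Hw; lia]).
  assert (L1 : forall i, (i <= nlo)%nat -> p (nlo - i)%nat <= 2 ^ i * p nlo).
  { induction i; intros hi. simpl. rewrite Nat.sub_0_r. lra.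
    pose proof (Hlo (nlo - S i)%nat ltac:(lia)) as h.
    replace (S (nlo - S i)) with (nlo - i)%nat in h by lia.
    pose proof (IHi ltac:(lia)). simpl. lra. }
  assert (L2 : forall j, (j <= nhi)%nat -> p j <= 2 ^ nlo * c).
  { intros j hj. assert (h1 : 1 <= 2 ^ nlo) by (apply pow_R1_Rle; lra).
    destruct (le_lt_dec nlo j) as [l|l].
    - pose proof (Hw j ltac:(lia)). nra.
    - pose proof (L1 (nlo - j)%nat ltac:(lia)) as h. replace (nlo - (nlo - j))%nat with j in h by lia.
      pose proof (Hw nlo ltac:(lia)).
      assert (2 ^ (nlo - j) <= 2 ^ nlo) by (apply Rle_pow; [lra|lia]).
      pose proof (hp nlo). nra. }
  assert (L3 : forall L, (L <= nhi)%nat -> sum_f_R0 p L <= (INR L + 1) * (2 ^ nlo * c)).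
  { induction L; intros hL. simpl. pose proof (L2 0%nat ltac:(lia)). lra.
    replace (sum_f_R0 p (S L)) with (sum_f_R0 p L + p (S L)) by reflexivity. rewrite S_INR. pose proof (L2 (S L) hL). pose proof (IHL ltac:(lia)). lra. }
  assert (L4 : forall i, sum_f_R0 p (nhi + i) + 2 * p (nhi + i)%nat <= sum_f_R0 p nhi + 2 * p nhi).
  { induction i. rewrite Nat.add_0_r. lra.
    replace (nhi + S i)%nat with (S (nhi + i)) by lia. simpl.
    pose proof (Hhi (nhi + i)%nat ltac:(lia)). pose proof (hp (S (nhi + i))). lra. }
  apply (lim_le_bound p 1); auto. intros L.
  assert (h1 : 1 <= 2 ^ nlo) by (apply pow_R1_Rle; lra).
  pose proof (L3 nhi (le_n _)). pose proof (Hw nhi ltac:(lia)).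
  assert (hB : sum_f_R0 p nhi + 2 * p nhi <= (INR nhi + 3) * 2 ^ nlo * c) by nra.
  destruct (le_lt_dec L nhi) as [l|l].
  - pose proof (sum_mono p hp L nhi l). pose proof (hp nhi). lra.
  - pose proof (L4 (L - nhi)%nat) as h. replace (nhi + (L - nhi))%nat with L in h by lia.
    pose proof (hp L). lra.
Qed.


Lemma floor_ex r : 0 <= r -> exists n : nat, INR n <= r < INR n + 1.
Proof.
  intros hr. destruct (base_Int_part r) as [h1 h2].
  assert (hz : (0 <= Int_part r)%Z).
  { apply le_IZR. assert (IZR (Int_part r) > -1) by lra.
    destruct (Z_le_gt_dec 0 (Int_part r)) as [l|l]; [apply IZR_le; auto|].
    assert (Int_part r <= -1)%Z by lia. apply IZR_le in H0. lra. }
  exists (Z.to_nat (Int_part r)). rewrite INR_IZR_INZ, Z2Nat.id by auto. lra.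
Qed.

Lemma ln_lt_id y : 0 < y -> ln y < y.
Proof.
  intros hy. pose proof (exp_ineq1 y ltac:(lra)).
  rewrite <- (ln_exp y) at 2. apply ln_increasing; lra.
Qed.

Lemma ln_growth M eps : 0 < M -> 0 < eps -> exists V1, 0 < V1 /\
  forall V, V1 <= V -> ln (M * V + 3) <= eps * V.
Proof.
  intros hM he. exists (Rmax 1 (4 * (M + 3) / eps ^ 2)). split.
  { apply Rlt_le_trans with 1; [lra|apply Rmax_l]. }
  intros V hV. pose proof (Rmax_l 1 (4 * (M + 3) / eps ^ 2)).
  pose proof (Rmax_r 1 (4 * (M + 3) / eps ^ 2)).
  set (y := M * V + 3). assert (hy : 0 < y) by (unfold y; nra).
  assert (e1 : ln y = 2 * ln (sqrt y)).
  { rewrite <- (sqrt_sqrt y) at 1 by lra. rewrite ln_mult by (apply sqrt_lt_R0; lra). ring. }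
  pose proof (ln_lt_id (sqrt y) (sqrt_lt_R0 y hy)).
  assert (h2 : sqrt y <= eps * V / 2).
  { rewrite <- (sqrt_pow2 (eps * V / 2)) by nra. apply sqrt_le_1_alt.
    unfold y. assert (hV4 : 4 * (M + 3) / eps ^ 2 <= V) by lra.
    assert (4 * (M + 3) <= V * eps^2).
    { apply (Rmult_le_compat_r (eps^2)) in hV4; [|nra].
      replace (4 * (M + 3) / eps ^ 2 * eps ^ 2) with (4 * (M+3)) in hV4 by (field; lra). lra. }
    nra. }
  lra.
Qed.

Lemma g1_window a dl M y w : 0 < a -> 0 < dl -> dl <= y <= M -> dl <= w <= M ->
  Rabs (g1f a y - g1f a w) <= Rabs (g1f a M) + Rabs (g1f a dl).
Proof.
  intros ha hd hy hw.
  pose proof (g1f_le a dl y ha hd (proj1 hy)). pose proof (g1f_le a y M ha ltac:(lra) (proj2 hy)).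
  pose proof (g1f_le a dl w ha hd (proj1 hw)). pose proof (g1f_le a w M ha ltac:(lra) (proj2 hw)).
  pose proof (Rle_abs (g1f a M)). pose proof (Rle_abs (- g1f a dl)). rewrite Rabs_Ropp in H4.
  apply Rabs_le. lra.
Qed.

Lemma mul_of_div c d V : 0 < d -> c / d <= V -> c <= d * V.
Proof. intros hd h. apply (Rmult_le_compat_l d) in h; [|lra].
  replace (d * (c / d)) with c in h by (field; lra). exact h. Qed.

Lemma le_div y c V : 0 < V -> y <= c * V -> y / V <= c.
Proof. intros hV h. apply (Rmult_le_reg_r V); auto. replace (y / V * V) with y by (field; lra). exact h. Qed.

Lemma ge_div y c V : 0 < V -> c * V <= y -> c <= y / V.
Proof. intros hV h. apply (Rmult_le_reg_r V); auto. replace (y / V * V) with y by (field; lra). exact h. Qed.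

Lemma ln2_lt1 : ln 2 < 1.
Proof. pose proof (exp_ineq1 1 ltac:(lra)). rewrite <- (ln_exp 1). apply ln_increasing; lra. Qed.

Lemma ln2_pos : 0 < ln 2.
Proof. pose proof ln_lt_2. lra. Qed.

Lemma core a z (pi : R -> nat -> R) : 0 < a -> 0 < z -> 2 * z ^ 2 = a ^ 2 ->
  (forall V, 0 < V -> (forall n, 0 < pi V n) /\ hyp_cut a V (pi V) /\ infinite_sum (pi V) 1) ->
  forall x, 0 < x -> forall eps, 0 < eps -> exists V0, 0 < V0 /\
  forall V k, V0 <= V -> Rabs (INR k / V - x) < x / 2 -> Rabs (Psi a V (pi V) k / V) < eps.
Proof.
  intros ha hz hza Hpi x hx eps heps.
  set (dl := Rmin (a/2) (Rmin (x/2) (Rmin (z/2) (eps/8)))).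
  assert (hdl1 : dl <= a/2) by apply Rmin_l.
  assert (hdl2 : dl <= x/2) by (eapply Rle_trans; [apply Rmin_r|apply Rmin_l]).
  assert (hdl3 : dl <= z/2) by (eapply Rle_trans; [apply Rmin_r|]; eapply Rle_trans; [apply Rmin_r|apply Rmin_l]).
  assert (hdl4 : dl <= eps/8) by (eapply Rle_trans; [apply Rmin_r|]; eapply Rle_trans; [apply Rmin_r|apply Rmin_r]).
  assert (hdl : 0 < dl).
  { unfold dl. repeat apply Rmin_glb_lt; lra. }
  set (M := 2 * a + 2 * x + 2 * z).
  assert (hM : 0 < M) by (unfold M; lra).
  set (e' := eps / (16 * M)).
  assert (he' : 0 < e') by (unfold e'; apply Rdiv_lt_0_compat; lra).
  destruct (ratio_lemma a dl e' ha hdl he') as [n0 Hn0].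
  set (G0 := Rabs (g1f a M) + Rabs (g1f a dl)).
  assert (hG0 : 0 <= G0) by (unfold G0; pose proof (Rabs_pos (g1f a M)); pose proof (Rabs_pos (g1f a dl)); lra).
  destruct (Gf_cont a z ha hz (eps/8) ltac:(lra)) as [ez [hez Hez]].
  rewrite (Gf_z a z ha hz hza) in Hez.
  destruct (ln_growth M (eps/8) hM ltac:(lra)) as [V1 [hV1 HV1]].
  set (V0 := Rmax (INR n0 / dl) (Rmax (1/dl) (Rmax (4/M) (Rmax (2/z) (Rmax (2/ez)
               (Rmax (8 * G0 / eps + 1) (Rmax (8/eps) V1))))))).
  exists V0. split.
  { apply Rlt_le_trans with (8/eps). apply Rdiv_lt_0_compat; lra.
    unfold V0. do 6 (eapply Rle_trans; [|apply Rmax_r]). apply Rmax_l. }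
  intros V k hV hk.
  assert (hV' : V1 <= V) by (eapply Rle_trans; [|exact hV]; unfold V0; do 6 (eapply Rle_trans; [|apply Rmax_r]); apply Rmax_r).
  assert (hVa : INR n0 / dl <= V) by (eapply Rle_trans; [|exact hV]; apply Rmax_l).
  assert (hVb : 1/dl <= V) by (eapply Rle_trans; [|exact hV]; unfold V0; eapply Rle_trans; [|apply Rmax_r]; apply Rmax_l).
  assert (hVc : 4/M <= V) by (eapply Rle_trans; [|exact hV]; unfold V0; do 2 (eapply Rle_trans; [|apply Rmax_r]); apply Rmax_l).
  assert (hVd : 2/z <= V) by (eapply Rle_trans; [|exact hV]; unfold V0; do 3 (eapply Rle_trans; [|apply Rmax_r]); apply Rmax_l).
  assert (hVe : 2/ez <= V) by (eapply Rle_trans; [|exact hV]; unfold V0; do 4 (eapply Rle_trans; [|apply Rmax_r]); apply Rmax_l).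
  assert (hVf : 8 * G0 / eps + 1 <= V) by (eapply Rle_trans; [|exact hV]; unfold V0; do 5 (eapply Rle_trans; [|apply Rmax_r]); apply Rmax_l).
  assert (hVg : 8/eps <= V) by (eapply Rle_trans; [|exact hV]; unfold V0; do 6 (eapply Rle_trans; [|apply Rmax_r]); apply Rmax_l).
  assert (hVpos : 0 < V) by lra.
  apply mul_of_div in hVa; auto. apply mul_of_div in hVb; auto.
  apply mul_of_div in hVc; auto. apply mul_of_div in hVd; auto. apply mul_of_div in hVe; auto.
  assert (hVf' : 8 * G0 / eps <= V) by lra. apply mul_of_div in hVf'; auto.
  apply mul_of_div in hVg; auto.
  assert (hiV : / V <= ez / 2) by (apply (Rmult_le_reg_r V); auto; rewrite Rinv_l by lra; lra).
  assert (hiV2 : / V <= eps / 8) by (apply (Rmult_le_reg_r V); auto; rewrite Rinv_l by lra; lra).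
  assert (hG0V : G0 <= eps / 8 * V) by lra.
  destruct (Hpi V hVpos) as [hp [hc hs]]. set (p := pi V) in *.
  assert (hp0 : forall n, 0 <= p n) by (intro; apply Rlt_le, hp).
  assert (hp1 : forall n, p n <= 1).
  { intro n. pose proof (term_le_sum p hp0 n). pose proof (sum_le_lim p 1 hp0 hs n). lra. }
  destruct (floor_ex (dl * V) ltac:(nra)) as [fl [hfl1 hfl2]].
  destruct (floor_ex (M * V) ltac:(nra)) as [nhi [hhi1 hhi2]].
  destruct (floor_ex (z * V) ltac:(nra)) as [mz [hmz1 hmz2]].
  set (nlo := S fl).
  assert (hnlo : INR nlo = INR fl + 1) by (apply S_INR).
  assert (HE : forall i, (nlo <= i)%nat -> ee a V p i <= e').
  { intros i hi. apply (Hn0 V p hVpos hp hc i).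
    - assert (INR n0 < INR nlo) by lra. apply INR_lt in H. lia.
    - assert (INR nlo <= INR i) by (apply le_INR; auto). lra. }
  assert (hnlo1 : 1 <= INR nlo) by lra.
  apply Rabs_lt_between in hk. destruct hk as [hk1 hk2].
  assert (hkx1 : x / 2 * V < INR k).
  { assert (x/2 < INR k / V) by lra. apply (Rmult_lt_compat_r V) in H; auto.
    replace (INR k / V * V) with (INR k) in H by (field; lra). lra. }
  assert (hkx2 : INR k < 3 * x / 2 * V).
  { assert (INR k / V < 3 * x / 2) by lra. apply (Rmult_lt_compat_r V) in H; auto.
    replace (INR k / V * V) with (INR k) in H by (field; lra). lra. }
  assert (hklo : (nlo <= k)%nat).
  { assert (INR fl < INR k) by nra. apply INR_lt in H. unfold nlo. lia. }
  assert (hkM : INR k <= M * V) by (unfold M; nra).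
  assert (hmlo : (nlo <= mz)%nat).
  { assert (INR fl < INR mz) by nra. apply INR_lt in H. unfold nlo. lia. }
  assert (hmM : INR mz <= M * V) by (unfold M; nra).
  assert (hwin : forall j, (nlo <= j)%nat -> INR j <= M * V -> dl <= INR j / V <= M).
  { intros j hj hjM. assert (INR nlo <= INR j) by (apply le_INR; auto).
    split; [apply ge_div|apply le_div]; auto; lra. }
  assert (HC : forall j, (nlo <= j)%nat -> INR j <= M * V ->
     Psi a V p k <= Psi a V p j + eps / 8 * V + G0 /\ Psi a V p j <= Psi a V p k + eps / 8 * V + G0).
  { intros j hj hjM.
    assert (hE1 : (INR j + INR k) * e' <= eps / 8 * V).
    { assert (0 <= INR j) by apply pos_INR. assert (0 <= INR k) by apply pos_INR.
      apply Rle_trans with (2 * M * V * e'). apply Rmult_le_compat_r; lra.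
      unfold e'. right. field. lra. }
    assert (hE2 : (INR k + INR j) * e' <= eps / 8 * V) by lra.
    pose proof (g1_window a dl M (INR k / V) (INR j / V) ha hdl (hwin k hklo hkM) (hwin j hj hjM)) as W1.
    pose proof (g1_window a dl M (INR j / V) (INR k / V) ha hdl (hwin j hj hjM) (hwin k hklo hkM)) as W2.
    fold G0 in W1, W2.
    pose proof (psi_cmp a V p nlo e' j k ha hVpos hp hnlo1 (Rlt_le _ _ he') HE hj hklo).
    pose proof (psi_cmp a V p nlo e' k j ha hVpos hp hnlo1 (Rlt_le _ _ he') HE hklo hj).
    split; lra. }
  assert (UP : Psi a V p k <= 3 * eps / 8 * V).
  { destruct (HC mz hmlo hmM) as [H1 _].
    assert (hmz : Rabs (INR mz / V - z) < ez).
    { apply Rabs_lt_between. split.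
      - assert (z - / V <= INR mz / V).
        { apply ge_div; auto. replace ((z - / V) * V) with (z * V - 1) by (field; lra). lra. }
        lra.
      - assert (INR mz / V <= z) by (apply le_div; auto; lra). lra. }
    pose proof (Hez _ hmz) as Hg. rewrite Rminus_0_r in Hg. apply Rabs_lt_between in Hg.
    unfold Psi in H1 at 2. 
    assert (ln (p mz) <= 0) by (rewrite <- ln_1; apply ln_le; auto).
    assert (V * Gf a (INR mz / V) <= V * (eps / 8)) by (apply Rmult_le_compat_l; lra).
    lra. }
  set (c := exp (Psi a V p k + eps / 8 * V + G0)).
  assert (hC : 0 < a^2 * V^2) by (apply Rmult_lt_0_compat; apply pow_lt; lra).
  assert (hlohi : (nlo <= nhi)%nat).
  { assert (dl <= M / 4) by (unfold M; lra).
    assert (INR nlo < INR nhi) by nra. apply INR_lt in H0. lia. }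
  assert (Mlo : forall j, (j < nlo)%nat -> p j <= 2 * p (S j)).
  { intros j hj. assert (hjf : INR j <= INR fl) by (apply le_INR; unfold nlo in hj; lia).
    pose proof (ratio_lo p (a^2*V^2) hp hc j) as L. unfold rr in L.
    pose proof (pos_INR j).
    assert (INR j * (INR j + 1) <= a^2 * V^2 / 2).
    { apply Rle_trans with (dl * V * (dl * V + dl * V)).
      apply Rmult_le_compat; lra. 
      assert (dl^2 <= a^2/4) by (replace (a^2/4) with ((a/2)^2) by field; apply pow_incr; lra). nra. }
    pose proof (hp j). pose proof (hp (S j)).
    assert (hr : 0 < p (S j) / p j) by (apply Rdiv_lt_0_compat; auto).
    assert (hh : 1/2 <= p (S j) / p j) by nra.
    apply (Rmult_le_compat_r (p j)) in hh; [|lra].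
    replace (p (S j) / p j * p j) with (p (S j)) in hh by (field; lra). lra. }
  assert (Mhi : forall j, (nhi <= j)%nat -> 2 * p (S j) <= p j).
  { intros j hj. assert (hjh : INR nhi <= INR j) by (apply le_INR; auto).
    pose proof (ratio_up p (a^2*V^2) hp hc j) as U. unfold rr in U.
    assert (2 * (a^2 * V^2) <= INR j * (INR j + 1)).
    { assert (M * V / 2 <= INR j) by lra. assert (M * V <= INR j + 1) by lra.
      apply Rle_trans with (M * V / 2 * (M * V)). 
      assert (4 * a^2 <= M^2) by (replace (4 * a^2) with ((2*a)^2) by ring; apply pow_incr; unfold M; lra). nra.
      apply Rmult_le_compat; nra. }
    pose proof (hp j). pose proof (hp (S j)).
    assert (hr : 0 < p (S j) / p j) by (apply Rdiv_lt_0_compat; auto).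
    assert (hh : p (S j) / p j <= 1/2) by nra.
    apply (Rmult_le_compat_r (p j)) in hh; [|lra].
    replace (p (S j) / p j * p j) with (p (S j)) in hh by (field; lra). lra. }
  assert (Mw : forall j, (nlo <= j <= nhi)%nat -> p j <= c).
  { intros j [hj1 hj2]. assert (hjM : INR j <= M * V) by (assert (INR j <= INR nhi) by (apply le_INR; auto); lra).
    destruct (HC j hj1 hjM) as [_ H2].
    assert (0 <= Gf a (INR j / V)).
    { apply (Gf_nonneg a z); auto. destruct (hwin j hj1 hjM). lra. }
    unfold Psi in H2 at 1. rewrite <- (exp_ln (p j)) by auto. unfold c.
    assert (hl : ln (p j) <= Psi a V p k + eps / 8 * V + G0).
    { assert (0 <= V * Gf a (INR j / V)) by (apply Rmult_le_pos; lra). lra. }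
    destruct (Rle_lt_or_eq_dec _ _ hl) as [l|e]; [apply Rlt_le, exp_increasing; auto | rewrite e; lra]. }
  pose proof (mass p nlo nhi c hlohi hp0 hs Mlo Mhi Mw) as Ms.
  assert (hc0 : 0 < c) by apply exp_pos.
  assert (hpw : 0 < 2 ^ nlo) by (apply pow_lt; lra).
  assert (hnh : 0 < INR nhi + 3) by (pose proof (pos_INR nhi); lra).
  assert (LM : 0 <= ln (INR nhi + 3) + INR nlo * ln 2 + (Psi a V p k + eps / 8 * V + G0)).
  { rewrite <- ln_1. rewrite <- (ln_exp (Psi a V p k + eps / 8 * V + G0)).
    rewrite <- ln_pow by lra. rewrite <- !ln_mult; [| apply Rmult_lt_0_compat; auto | apply exp_pos | auto | auto].
    fold c. apply ln_le; lra. }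
  assert (L1 : ln (INR nhi + 3) <= eps / 8 * V).
  { eapply Rle_trans; [|apply HV1; auto]. apply ln_le; lra. }
  assert (L2 : INR nlo * ln 2 <= dl * V + 1).
  { pose proof ln2_lt1. pose proof ln2_pos. pose proof (pos_INR nlo). nra. }
  assert (LOW : - (5 * eps / 8) * V <= Psi a V p k) by nra.
  apply Rabs_lt_between. split.
  - apply Rlt_le_trans with (- (5 * eps / 8)). lra. apply ge_div; auto.
  - apply Rle_lt_trans with (3 * eps / 8). apply le_div; auto. lra.
Qed.


Theorem mainTheorem3 (k1 k2 : R) (hk1 : 0 < k1) (hk2 : 0 < k2)
  (pi : R -> nat -> R)
  (hpi : forall V, 0 < V -> stationary_dist k1 k2 V (pi V)) :
  (* large-volume limit of the stationary distribution *)
  (forall (Vs : nat -> R) (k : nat -> nat) (xt : R),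
     (forall n, 0 < Vs n) -> Un_growing Vs -> cv_infty Vs ->
     0 < xt -> Un_cv (fun n => INR (k n) / Vs n) xt ->
     Un_cv (fun n => - / Vs n * ln (pi (Vs n) (k n))) (gfun k1 k2 xt)) /\
  (* g is a Lyapunov function for x' = k1 - 2 k2 x^2 on (0,oo) *)
  (let xs := sqrt (k1 / (2 * k2)) in
   exists g1 g2 : R -> R,
     (forall x, 0 < x -> derivable_pt_lim (gfun k1 k2) x (g1 x)) /\
     (forall x, 0 < x -> derivable_pt_lim g1 x (g2 x)) /\
     (forall x, 0 < x -> 0 < g2 x) /\
     gfun k1 k2 xs = 0 /\
     (forall x, 0 < x -> x <> xs -> 0 < gfun k1 k2 x) /\
     (forall x, 0 < x -> g1 x * (k1 - 2 * k2 * x ^ 2) <= 0) /\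
     (forall x, 0 < x -> (g1 x * (k1 - 2 * k2 * x ^ 2) = 0 <-> x = xs))).
Proof.
  set (a := sqrt (k1 / k2)).
  assert (hq : 0 < k1 / k2) by (apply Rdiv_lt_0_compat; auto).
  assert (ha : 0 < a) by (apply sqrt_lt_R0; auto).
  assert (ha2 : a ^ 2 = k1 / k2) by (unfold a; rewrite pow2_sqrt; lra).
  set (z := sqrt (k1 / (2 * k2))).
  assert (hq2 : 0 < k1 / (2 * k2)) by (apply Rdiv_lt_0_compat; lra).
  assert (hz : 0 < z) by (apply sqrt_lt_R0; auto).
  assert (hz2 : z ^ 2 = k1 / (2 * k2)) by (unfold z; rewrite pow2_sqrt; lra).
  assert (hza : 2 * z ^ 2 = a ^ 2) by (rewrite hz2, ha2; field; lra).
  assert (hG : forall x, gfun k1 k2 x = Gf a x) by reflexivity.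
  split.
  - intros Vs k xt hVs _ hinf hxt hcv eps heps.
    assert (Hpi : forall V, 0 < V -> (forall n, 0 < pi V n) /\ hyp_cut a V (pi V) /\ infinite_sum (pi V) 1).
    { intros V hV. pose proof (hpi V hV) as hs. split; [|split].
      - apply (stat_pos k1 k2 V); auto.
      - intro n. rewrite ha2. apply (cutN k1 k2 V); auto.
      - apply hs. }
    destruct (core a z pi ha hz hza Hpi xt hxt (eps/2) ltac:(lra)) as [V0 [hV0 HV0]].
    destruct (Gf_cont a xt ha hxt (eps/2) ltac:(lra)) as [e1 [he1 He1]].
    destruct (hcv (Rmin e1 (xt/2))) as [N1 HN1].
    { apply Rmin_glb_lt; lra. }
    destruct (hinf V0) as [N2 HN2].
    exists (max N1 N2). intros n hn.
    pose proof (HN1 n ltac:(lia)) as h1. unfold R_dist in h1.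
    pose proof (HN2 n ltac:(lia)) as h2.
    pose proof (Rmin_l e1 (xt/2)). pose proof (Rmin_r e1 (xt/2)).
    pose proof (HV0 (Vs n) (k n) ltac:(lra) ltac:(lra)) as P.
    pose proof (He1 (INR (k n) / Vs n) ltac:(lra)) as Q.
    unfold R_dist. rewrite hG.
    pose proof (hVs n) as hv.
    assert (E : - / Vs n * ln (pi (Vs n) (k n)) =
       Gf a (INR (k n) / Vs n) - Psi a (Vs n) (pi (Vs n)) (k n) / Vs n).
    { unfold Psi. field. lra. }
    rewrite E.
    replace (Gf a (INR (k n) / Vs n) - Psi a (Vs n) (pi (Vs n)) (k n) / Vs n - Gf a xt)
      with ((Gf a (INR (k n) / Vs n) - Gf a xt) + - (Psi a (Vs n) (pi (Vs n)) (k n) / Vs n)) by ring.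
    eapply Rle_lt_trans. apply Rabs_triang. rewrite Rabs_Ropp. lra.
  - intros xs. change xs with z.
    exists (g1f a), (g2f a).
    assert (gz : g1f a z = 0) by (apply g1f_z; auto).
    assert (sgn : forall x, 0 < x -> k1 - 2 * k2 * x ^ 2 = 2 * k2 * (z^2 - x^2)).
    { intros x hx. rewrite hz2. field. lra. }
    split; [|split; [|split; [|split; [|split; [|split]]]]].
    + intros x hx. change (gfun k1 k2) with (Gf a). apply Gf_deriv; auto.
    + intros x hx. apply g1f_deriv; auto.
    + intros x hx. unfold g2f. pose proof (SS_pos a x ha).
      assert (0 < / x) by (apply Rinv_0_lt_compat; auto).
      assert (0 < / SS a x) by (apply Rinv_0_lt_compat; auto). lra.
    + rewrite hG. apply Gf_z; auto.
    + intros x hx hne. rewrite hG. apply (Gf_pos a z); auto.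
    + intros x hx. rewrite sgn by auto.
      destruct (Rle_or_lt x z) as [l|l].
      * pose proof (g1f_le a x z ha hx l). assert (x^2 <= z^2) by (apply pow_incr; lra).
        assert (0 <= 2 * k2 * (z^2 - x^2)) by nra. rewrite gz in *. nra.
      * pose proof (g1f_lt a z x ha hz l). assert (z^2 < x^2) by nra.
        assert (2 * k2 * (z^2 - x^2) < 0) by nra. rewrite gz in *. nra.
    + intros x hx. rewrite sgn by auto. split.
      * intros e. apply Rmult_integral in e. destruct e as [e|e].
        -- destruct (Rtotal_order x z) as [l|[l|l]]; auto.
           ++ pose proof (g1f_lt a x z ha hx l). lra.
           ++ pose proof (g1f_lt a z x ha hz l). lra.
        -- assert (e2 : z^2 = x^2) by nra.
           destruct (Rtotal_order x z) as [l|[l|l]]; auto; nra.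
      * intros ->. rewrite gz. ring.
Qed.
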